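(* Let $((T_\infty,\ell),\eta)$ have law $\mu\otimes\mathcal B(1/2)$ and let $Q_\infty=\Phi((T_\infty,\ell),\eta)$. Let $r>0$ be an integer and let $v\in V(Q_\infty)$. Then: 1. $v\in F_{-r}(Q_\infty)$ if and only if $\ell(v')>-r$ for every $v'\in[[\varnothing,v]]$; 2. $v\in\partial F_{-r}(Q_\infty)$ if and only if $\ell(v)=-r$ and $\ell(v')>-r$ for every $v'\in[[\varnothing,v]]\setminus\{v\}$. Here $[[\varnothing,v]]$ denotes the set of vertices on the geodesic path from $\varnothing$ to $v$ in the tree $T_\infty$.
   Context: **The law $\mu$.** $\rho_l$ is the law of a Galton–Watson plane tree with offspring law $P(k)=2^{-k-1}$, root label $l$, and each non-root vertex labeled by its parent's label plus an independent uniform element of $\{-1,0,1\}$. $\mu$ is the law of $(T_\infty,\ell)$, which has a spine $\varnothing=S(0),S(1),\dots$ whose labels $X_n$ form a random walk from 0 with i.i.d. uniform steps in $\{-1,0,1\}$. Conditionally on $(X_n)$, independent trees with law $\rho_{X_n}$ are grafted to the left and to the right of each $S(n)$. **The Schaeffer map $\Phi$.** Corners are indexed by $\mathbb Z$: $c_0,c_1,\dots$ are the left-side corners in clockwise contour order from the root corner $c_0$, and negative indices are the right-side corners in counterclockwise order. The successor of $c_i$ is the first $c_j$, $j>i$, with label $\ell(c_i)-1$. $\Phi$ gives the quadrangulation with vertex set $V(T_\infty)$ made of arcs from corners to successors. It is rooted at the arc from $c_0$ to its successor, with orientation reversed iff $\eta=1$. **The augmented graph $\hat Q_\infty$.** It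 is obtained from $Q_\infty$ as follows: - in each face whose vertices in clockwise order have labels $l,l+1,l,l+1$, add an edge between the two vertices labeled $l+1$; - in each face with labels $l,l+1,l+2,l+1$, double the edge between the last two vertices. **The sets $F_{-r}$ and $\partial F_{-r}$.** $F_{-r}(Q_\infty)$ is the vertex set of the connected component containing $\varnothing$ of the subgraph of $\hat Q_\infty$ induced by $\{v:\ell(v)>-r\}$. $\partial F_{-r}(Q_\infty)$ is the set of vertices $v$ with $\ell(v)\le-r$ joined by an edge of $\hat Q_\infty$ to a vertex of $F_{-r}(Q_\infty)$. *)

(* Defs.v *)
From mathcomp Require Import all_boot all_order all_algebra.
Set Implicit Arguments. Unset Strict Implicit. Unset Printing Implicit Defensive.
Import Order.TTheory GRing.Theory Num.Theory.
Local Open Scope ring_scope.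

(* Finite plane tree; each child carries the label increment relative to its
   parent.  Children are listed in the order in which the contour visits them. *)
Inductive ltree := LNode of seq (int * ltree).

Fixpoint wl (t : ltree) : Prop :=
  let: LNode cs := t in
  (fix aux (cs : seq (int * ltree)) : Prop :=
     match cs with
     | [::] => True
     | (d, c) :: cs' => (-1 <= d <= 1) /\ wl c /\ aux cs'
     end) cs.

(* contour of a finite tree: list of visited vertices (paths from the root,
   child indices top-down); each visit is a corner *)
Fixpoint contour (t : ltree) : seq (seq nat) :=
  let: LNode cs := t in
  [::] :: (fix aux (k : nat) (cs : seq (int * ltree)) : seq (seq nat) :=
             match cs with
             | [::] => [::]
             | (_, c) :: cs' =>
                 map (cons k) (contour c) ++ [:: [::]] ++ aux k.+1 cs'
             end) 0%N cs.

Fixpoint pathlabel (t : ltree) (p : seq nat) : int :=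
  match p with
  | [::] => 0
  | i :: p' => let: LNode cs := t in
               let: (d, c) := nth (0, LNode [::]) cs i in d + pathlabel c p'
  end.

(* A realization of (T_infty, ell): spine labels X_n, and the finite labeled
   trees grafted to the left (lt n) and to the right (rt n) of S(n). *)
Record itree := ITree { sp : nat -> int; lt : nat -> ltree; rt : nat -> ltree }.

Definition in_support_mu (T : itree) : Prop :=
  sp T 0%N = 0 /\ (forall n, -1 <= sp T n.+1 - sp T n <= 1) /\
  (forall n, wl (lt T n)) /\ (forall n, wl (rt T n)).

(* Vertices: (n, true, [::]) is the spine vertex S(n); (n, true, p) (resp.
   (n, false, p)) with p nonempty is the vertex at path p of the tree grafted
   to the left (resp. right) of S(n). *)
Definition vertex := (nat * bool * seq nat)%type.
Definition mkv (n : nat) (b : bool) (p : seq nat) : vertex :=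
  if p is [::] then (n, true, [::]) else (n, b, p).
Definition root_v : vertex := (0%N, true, [::]).

Definition lab (T : itree) (v : vertex) : int :=
  let: (n, b, p) := v in
  sp T n + pathlabel (if b then lt T n else rt T n) p.

(* parent in T_infty (the root is its own parent) *)
Definition parent (v : vertex) : vertex :=
  let: (n, b, p) := v in
  if p is [::] then (n.-1, true, [::]) else mkv n b (take (size p).-1 p).

(* v' lies on the geodesic [[root, v]] of T_infty, i.e. v' is an ancestor of v
   (v included) *)
Definition on_geod (v' v : vertex) : Prop := exists k, iter k parent v = v'.

Fixpoint nthcat_aux (A : Type) (x0 : A) (f : nat -> seq A) (fuel n k : nat) : A :=
  match fuel with
  | 0 => x0
  | fuel'.+1 => if (k < size (f n))%N then nth x0 (f n) k
                else nthcat_aux x0 f fuel' n.+1 (k - size (f n))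
  end.
Definition nthcat (A : Type) (x0 : A) (f : nat -> seq A) (k : nat) : A :=
  nthcat_aux x0 f k.+1 0 k.

(* left side: clockwise contour starting at the root corner;
   right side: counterclockwise contour starting at the root corner *)
Definition leftseq (T : itree) (k : nat) : vertex :=
  nthcat root_v (fun n => map (mkv n true) (contour (lt T n))) k.
Definition rightseq (T : itree) (k : nat) : vertex :=
  nthcat root_v (fun n => map (mkv n false) (contour (rt T n))) k.

(* corners c_i, i in Z: c_0 root corner, c_i (i>0) left side,
   c_{-m} (m>0) the m-th right side corner after c_0 (counterclockwise) *)
Definition cv (T : itree) (i : int) : vertex :=
  match i with
  | Posz k => leftseq T k
  | Negz m => rightseq T m.+1
  end.
Definition clab (T : itree) (i : int) : int := lab T (cv T i).

Definition is_succ (T : itree) (i j : int) : Prop :=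
  i < j /\ clab T j = clab T i - 1 /\
  (forall k, i < k -> k < j -> clab T k <> clab T i - 1).

(* rooted map as vertex set, adjacency relation (multiplicities are irrelevant
   for everything below) and oriented root edge *)
Record rmap := RMap { mV : vertex -> Prop; madj : vertex -> vertex -> Prop;
                      mroot : vertex -> vertex -> Prop }.

Definition VT (T : itree) (v : vertex) : Prop := exists i, cv T i = v.

Definition Phi (T : itree) (eta : bool) : rmap :=
  RMap (VT T)
       (fun x y => exists i j, is_succ T i j /\
          ((x = cv T i /\ y = cv T j) \/ (x = cv T j /\ y = cv T i)))
       (fun x y => exists j, is_succ T 0 j /\
          (if eta then x = cv T j /\ y = cv T 0 else x = cv T 0 /\ y = cv T j)).

Definition svert (T : itree) (i : int) (x : vertex) : Prop :=
  exists j, is_succ T i j /\ cv T j = x.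

(* Faces of Q_infty (one per edge of T_infty, cf. Schaeffer's bijection):
   (i,i+1) and (j,j+1) are the two traversals of a tree edge {a,b} with
   a = c_i = c_{j+1}, b = c_{i+1} = c_j.  The face is the cyclic sequence of
   its four vertices (x0,x1,x2,x3). *)
Definition face (T : itree) (x0 x1 x2 x3 : vertex) : Prop :=
  exists i j, cv T i = cv T (j + 1) /\ cv T (i + 1) = cv T j /\
  let a := cv T i in let b := cv T (i + 1) in
  (  (lab T b = lab T a /\
        x0 = a /\ svert T i x1 /\ x2 = b /\ svert T j x3)
  \/ (lab T b = lab T a + 1 /\
        x0 = a /\ svert T i x1 /\ svert T (i + 1) x2 /\ x3 = b)
  \/ (lab T b = lab T a - 1 /\
        x0 = b /\ svert T j x1 /\ svert T (j + 1) x2 /\ x3 = a)).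

(* augmented graph: in each face with labels l,l+1,l,l+1 (cyclically) add an
   edge between the two vertices labelled l+1.  (Doubling edges does not
   change adjacency.) *)
Definition aug_adj (T : itree) (Q : rmap) (x y : vertex) : Prop :=
  madj Q x y \/
  exists x0 x1 x2 x3 l, face T x0 x1 x2 x3 /\
    ((lab T x0 = l /\ lab T x1 = l + 1 /\ lab T x2 = l /\ lab T x3 = l + 1 /\
      ((x = x1 /\ y = x3) \/ (x = x3 /\ y = x1)))
  \/ (lab T x0 = l + 1 /\ lab T x1 = l /\ lab T x2 = l + 1 /\ lab T x3 = l /\
      ((x = x0 /\ y = x2) \/ (x = x2 /\ y = x0)))).

Inductive conn (P : vertex -> Prop) (adj : vertex -> vertex -> Prop)
  : vertex -> vertex -> Prop :=
| conn_refl x : P x -> conn P adj x x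
| conn_step x y z : P x -> adj x y -> conn P adj y z -> conn P adj x z.

Definition Fr (T : itree) (Q : rmap) (r : nat) (v : vertex) : Prop :=
  conn (fun w => mV Q w /\ lab T w > - (r%:Z)) (aug_adj T Q) root_v v.

Definition dFr (T : itree) (Q : rmap) (r : nat) (v : vertex) : Prop :=
  mV Q v /\ lab T v <= - (r%:Z) /\ exists w, Fr T Q r w /\ aug_adj T Q v w.

(* Main.v *)
Require Import Defs.
From mathcomp Require Import all_boot all_order all_algebra.
From mathcomp Require Import zify.
Set Implicit Arguments. Unset Strict Implicit. Unset Printing Implicit Defensive.
Import Order.TTheory GRing.Theory Num.Theory.
Local Open Scope ring_scope.

Fixpoint all_ch (P : ltree -> Prop) (cs : seq (int * ltree)) : Prop :=
  match cs with [::] => True | (_, c) :: cs' => P c /\ all_ch P cs' end.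

Lemma ltree_ind' (P : ltree -> Prop) :
  (forall cs, all_ch P cs -> P (LNode cs)) -> forall t, P t.
Proof.
move=> H; refine (fix IH t := match t with LNode cs => H cs
  ((fix aux cs := match cs return all_ch P cs with
     [::] => I | (d, c) :: cs' => conj (IH c) (aux cs') end) cs) end).
Qed.

Fixpoint caux (k : nat) (cs : seq (int * ltree)) : seq (seq nat) :=
  match cs with
  | [::] => [::]
  | (_, c) :: cs' => map (cons k) (contour c) ++ [:: [::]] ++ caux k.+1 cs'
  end.

Lemma contourE cs : contour (LNode cs) = [::] :: caux 0 cs.
Proof. by []. Qed.

Definition bl (p : seq nat) := take (size p).-1 p.

Definition tparb (x y : seq nat) : bool :=
  ((y != [::]) && (x == bl y)) || ((x != [::]) && (y == bl x)).

Lemma bl_cons k q : q != [::] -> bl (k :: q) = k :: bl q.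
Proof. by case: q. Qed.

Lemma tparb_cons k x y : tparb x y -> tparb (k :: x) (k :: y).
Proof.
rewrite /tparb => /orP [/andP [hy /eqP ->]|/andP [hx /eqP ->]].
  by apply/orP; left; rewrite bl_cons // eqxx.
by apply/orP; right; rewrite bl_cons // eqxx.
Qed.

Definition Tr (s : seq (seq nat)) : Prop := forall p, p \in s -> p != [::] ->
  (exists s1 s2, s = s1 ++ bl p :: p :: s2) /\
  (exists s1 s2, s = s1 ++ p :: bl p :: s2).

Definition good_ctr (s : seq (seq nat)) : Prop := exists rest,
  s = [::] :: rest /\ last [::] rest = [::] /\ path tparb [::] rest /\ Tr s.

Lemma caux_good cs : all_ch (fun c => good_ctr (contour c)) cs -> forall k,
  last [::] (caux k cs) = [::] /\ path tparb [::] (caux k cs) /\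
  Tr ([::] :: caux k cs).
Proof.
elim: cs => [|[d c] cs IH] /=.
  move=> _ k; split => //; split => // p; rewrite inE => /eqP -> //.
move=> [[rest [hc [hl [hp htr]]]] /IH {}IH] k.
have [L' [P' T']] := IH k.+1.
set C := caux k.+1 cs.
have hM : map (cons k) (contour c) = [:: k] :: map (cons k) rest by rewrite hc.
have hlM : last [::] (map (cons k) (contour c)) = [:: k].
  by rewrite hM /= (last_map (cons k) rest [::]) hl.
split; first by rewrite last_cat hlM /=.
split.
  rewrite cat_path hlM /= P' andbT hM /= path_map.
  apply: sub_path hp => x y /=; exact: tparb_cons.
move=> p; rewrite inE mem_cat => /orP [/eqP -> //|/orP [pM|pC]] pn.
  move/mapP: pM => [q qc ->].
  have [->|qn] := eqVneq q [::].
    split.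
      by exists [::]; exists (map (cons k) rest ++ [:: [::]] ++ C); rewrite hM.
    move: hl; case/lastP: rest hc hM hp => [|r x] hc hM hp.
      by move=> _; exists [:: [::]]; exists C; rewrite hM.
    rewrite last_rcons => hx; subst x; exists ([::] :: [:: k] :: map (cons k) r); exists C.
    by rewrite hM map_rcons /= cat_rcons.
  have [[s1 [s2 e1]] [s3 [s4 e2]]] := htr q qc qn.
  split.
    exists ([::] :: map (cons k) s1); exists (map (cons k) s2 ++ [:: [::]] ++ C).
    by rewrite e1 map_cat /= bl_cons // -catA.
  exists ([::] :: map (cons k) s3); exists (map (cons k) s4 ++ [:: [::]] ++ C).
  by rewrite e2 map_cat /= bl_cons // -catA.
have pC' := pC.
have [[s1 [s2 e1]] [s3 [s4 e2]]] := T' p pC' pn.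
split.
  exists (([::] :: map (cons k) (contour c)) ++ s1); exists s2.
  by rewrite -catA -e1.
exists (([::] :: map (cons k) (contour c)) ++ s3); exists s4.
by rewrite -catA -e2.
Qed.

Lemma ctr_good t : good_ctr (contour t).
Proof.
elim/ltree_ind': t => cs H.
have [hl [hp htr]] := caux_good H 0.
by exists (caux 0 cs).
Qed.

Fixpoint offs (A : Type) (f : nat -> seq A) (n : nat) : nat :=
  match n with 0 => 0 | n'.+1 => offs f n' + size (f n') end%N.

Lemma offs_mono (A : Type) (f : nat -> seq A) j n : (j <= n)%N -> (offs f j <= offs f n)%N.
Proof.
elim: n => [|n IH]; first by rewrite leqn0 => /eqP ->.
rewrite leq_eqVlt => /orP [/eqP -> //|]; rewrite ltnS => /IH /= h; lia.
Qed.

Lemma offs_ge (A : Type) (f : nat -> seq A) : (forall i, 0 < size (f i))%N ->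
  forall n, (n <= offs f n)%N.
Proof. move=> Hf; elim=> [//|n IH] /=; have := Hf n; lia. Qed.

Lemma nthcat_auxE (A : Type) (x0 : A) f (Hf : forall i, (0 < size (f i))%N) :
  forall fuel j n m, (j <= n)%N -> (n - j < fuel)%N -> (m < size (f n))%N ->
  nthcat_aux x0 f fuel j (offs f n - offs f j + m) = nth x0 (f n) m.
Proof.
elim=> [|fuel IH] j n m hjn hf hm //=.
have [ejn|ljn] := eqVneq j n.
  by subst j; rewrite subnn add0n hm.
have ljn' : (j < n)%N by rewrite ltn_neqAle ljn hjn.
have h1 := offs_mono f ljn'; rewrite /= in h1.
rewrite ifF; last by apply/negbTE; rewrite -leqNgt; lia.
have -> : (offs f n - offs f j + m - size (f j) = offs f n - offs f j.+1 + m)%N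
  by rewrite /=; lia.
apply: IH => //; lia.
Qed.

Lemma NC1 (A : Type) (x0 : A) f (Hf : forall i, (0 < size (f i))%N) n m :
  (m < size (f n))%N -> nthcat x0 f (offs f n + m) = nth x0 (f n) m.
Proof.
move=> hm; rewrite /nthcat.
have h0 : (offs f n + m = offs f n - offs f 0 + m)%N by rewrite /= subn0.
rewrite {2}h0; apply: nthcat_auxE => //; have := offs_ge Hf n; lia.
Qed.

Lemma NC2 (A : Type) (f : nat -> seq A) (Hf : forall i, (0 < size (f i))%N) k :
  exists n m, (m < size (f n))%N /\ k = (offs f n + m)%N.
Proof.
elim: k => [|k [n [m [hm ->]]]]; first by exists 0%N, 0%N; split; [exact: (Hf 0%N) | rewrite /=; lia].
have [h|h] := ltnP m.+1 (size (f n)).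
  by exists n, m.+1; split => //; lia.
exists n.+1, 0%N; split; first exact: Hf.
rewrite /=; lia.
Qed.

Lemma nthcat_form (A : Type) (x0 : A) f (Hf : forall i, (0 < size (f i))%N) k :
  exists n m, (m < size (f n))%N /\ nthcat x0 f k = nth x0 (f n) m.
Proof.
have [n [m [hm ->]]] := NC2 Hf k; exists n, m; split => //; exact: NC1.
Qed.

Lemma nthcat_pair (A : Type) (x0 : A) f (Hf : forall i, (0 < size (f i))%N) n s1 x y s2 :
  f n = s1 ++ x :: y :: s2 ->
  exists k, nthcat x0 f k = x /\ nthcat x0 f k.+1 = y.
Proof.
move=> e; exists (offs f n + size s1)%N; split.
  by rewrite NC1 // e ?nth_cat ?ltnn ?subnn // size_cat /=; lia.
rewrite -addnS NC1 // e ?nth_cat ?size_cat /=; last lia.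
by rewrite ltnNge leqnSn /= subSnn.
Qed.

Lemma nthcat_junction (A : Type) (x0 : A) f (Hf : forall i, (0 < size (f i))%N) n :
  exists k, nthcat x0 f k = nth x0 (f n) (size (f n)).-1 /\
            nthcat x0 f k.+1 = nth x0 (f n.+1) 0.
Proof.
exists (offs f n + (size (f n)).-1)%N; split.
  by rewrite NC1 //; have := Hf n; lia.
have -> : ((offs f n + (size (f n)).-1).+1 = offs f n.+1 + 0)%N by rewrite /=; have := Hf n; lia.
by rewrite NC1 //.
Qed.

Definition tadj (x y : vertex) : Prop := x = parent y \/ y = parent x.

Lemma nthcat_adj (f : nat -> seq vertex) (Hf : forall i, (0 < size (f i))%N)
  (Hh : forall n, nth root_v (f n) 0 = (n, true, [::]))
  (Hl : forall n, nth root_v (f n) (size (f n)).-1 = (n, true, [::]))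
  (Hin : forall n m, (m.+1 < size (f n))%N ->
     tadj (nth root_v (f n) m) (nth root_v (f n) m.+1)) k :
  tadj (nthcat root_v f k) (nthcat root_v f k.+1).
Proof.
have [n [m [hm ->]]] := NC2 Hf k.
have [h|h] := ltnP m.+1 (size (f n)).
  by rewrite -addnS !NC1 //; apply: Hin.
have em : m = (size (f n)).-1 by lia.
have -> : ((offs f n + m).+1 = offs f n.+1 + 0)%N by rewrite /=; lia.
rewrite (@NC1 _ root_v f Hf n m hm) (@NC1 _ root_v f Hf n.+1 0 (Hf n.+1)) Hh em Hl.
by left.
Qed.

Definition blk (n : nat) (b : bool) (t : ltree) : seq vertex := map (mkv n b) (contour t).

Lemma mkv_ne n b p : p != [::] -> mkv n b p = (n, b, p).
Proof. by case: p. Qed.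

Lemma parent_mkv n b p : p != [::] -> parent (n, b, p) = mkv n b (bl p).
Proof. by case: p. Qed.

Lemma tparb_tadj n b x y : tparb x y -> tadj (mkv n b x) (mkv n b y).
Proof.
case/orP => /andP [hy /eqP ->].
  by left; rewrite (mkv_ne _ _ hy) parent_mkv.
by right; rewrite (mkv_ne _ _ hy) parent_mkv.
Qed.

Lemma blk_size n b t : (0 < size (blk n b t))%N.
Proof. by have [rest [e _]] := ctr_good t; rewrite /blk e. Qed.

Lemma blk_head n b t : nth root_v (blk n b t) 0 = (n, true, [::]).
Proof. by have [rest [e _]] := ctr_good t; rewrite /blk e. Qed.

Lemma blk_last n b t : nth root_v (blk n b t) (size (blk n b t)).-1 = (n, true, [::]).
Proof.
have [rest [e [hl _]]] := ctr_good t; rewrite nth_last /blk e /=.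
by rewrite (last_map (mkv n b) rest [::]) hl.
Qed.

Lemma blk_adj n b t m : (m.+1 < size (blk n b t))%N ->
  tadj (nth root_v (blk n b t) m) (nth root_v (blk n b t) m.+1).
Proof.
have [rest [e [_ [hp _]]]] := ctr_good t.
rewrite /blk size_map => hm.
rewrite (nth_map [::]) ?(nth_map [::]) //; last by lia.
apply: tparb_tadj; rewrite e.
move/(pathP [::]): hp => /(_ m); rewrite e /= in hm; apply; lia.
Qed.

Lemma blk_trav n b t p : p \in contour t -> p != [::] ->
  (exists s1 s2, blk n b t = s1 ++ parent (n, b, p) :: (n, b, p) :: s2) /\
  (exists s1 s2, blk n b t = s1 ++ (n, b, p) :: parent (n, b, p) :: s2).
Proof.
move=> hp pn; have [rest [e [_ [_ htr]]]] := ctr_good t.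
have [[s1 [s2 e1]] [s3 [s4 e2]]] := htr p hp pn.
rewrite /blk parent_mkv // -(mkv_ne n b pn); split.
  by exists (map (mkv n b) s1), (map (mkv n b) s2); rewrite e1 map_cat.
by exists (map (mkv n b) s3), (map (mkv n b) s4); rewrite e2 map_cat.
Qed.

Definition fL (T : itree) n := blk n true (lt T n).
Definition fR (T : itree) n := blk n false (rt T n).

Lemma fL_size T : forall i, (0 < size (fL T i))%N.
Proof. move=> i; exact: blk_size. Qed.
Lemma fR_size T : forall i, (0 < size (fR T i))%N.
Proof. move=> i; exact: blk_size. Qed.

Lemma leftseqE T k : leftseq T k = nthcat root_v (fL T) k.
Proof. by []. Qed.
Lemma rightseqE T k : rightseq T k = nthcat root_v (fR T) k.
Proof. by []. Qed.

Lemma leftseq0 T : leftseq T 0 = root_v.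
Proof.
by rewrite leftseqE -[0%N]/(offs (fL T) 0 + 0)%N NC1 ?blk_head //; [exact: fL_size|exact: blk_size].
Qed.
Lemma rightseq0 T : rightseq T 0 = root_v.
Proof.
by rewrite rightseqE -[0%N]/(offs (fR T) 0 + 0)%N NC1 ?blk_head //; [exact: fR_size|exact: blk_size].
Qed.

Lemma leftseq_adj T k : tadj (leftseq T k) (leftseq T k.+1).
Proof.
rewrite !leftseqE; apply: nthcat_adj; [exact: fL_size | move=> n; exact: blk_head
  | move=> n; exact: blk_last | move=> n m; exact: blk_adj].
Qed.
Lemma rightseq_adj T k : tadj (rightseq T k) (rightseq T k.+1).
Proof.
rewrite !rightseqE; apply: nthcat_adj; [exact: fR_size | move=> n; exact: blk_head
  | move=> n; exact: blk_last | move=> n m; exact: blk_adj].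
Qed.

Lemma tadj_sym x y : tadj x y -> tadj y x.
Proof. by case; [right|left]. Qed.

Lemma cvN T k : cv T (- (k%:Z)) = rightseq T k.
Proof.
case: k => [|k]; first by rewrite /= rightseq0 -(leftseq0 T).
by rewrite -NegzE.
Qed.

Lemma cv_adj T (i : int) : tadj (cv T i) (cv T (i + 1)).
Proof.
case: i => [k|m].
  have -> : (Posz k + 1 = Posz k.+1) by lia.
  exact: leftseq_adj.
have -> : (Negz m + 1 = - (m%:Z)) by rewrite NegzE; lia.
rewrite cvN /=; apply: tadj_sym; exact: rightseq_adj.
Qed.

Lemma cv_form T (i : int) : exists n b p, cv T i = mkv n b p /\
  p \in contour (if b then lt T n else rt T n).
Proof.
case: i => [k|m] /=.
  rewrite leftseqE; have [n [m [hm ->]]] := nthcat_form root_v (fL_size T) k.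
  exists n, true, (nth [::] (contour (lt T n)) m).
  rewrite /fL /blk (nth_map [::]) ?mem_nth //; rewrite /fL /blk size_map in hm => //.
rewrite rightseqE; have [n [k [hm ->]]] := nthcat_form root_v (fR_size T) m.+1.
exists n, false, (nth [::] (contour (rt T n)) k).
rewrite /fR /blk (nth_map [::]) ?mem_nth //; rewrite /fR /blk size_map in hm => //.
Qed.

Lemma negS1 (k : nat) : - (k.+1%:Z) + 1 = - (k%:Z).
Proof. lia. Qed.

Lemma cv_trav T v : VT T v -> v <> root_v ->
  (exists i, cv T i = parent v /\ cv T (i + 1) = v) /\
  (exists j, cv T j = v /\ cv T (j + 1) = parent v).
Proof.
move=> [i0 <-] vr; have [n [b [p [e hp]]]] := cv_form T i0.
rewrite e in vr *; clear e.
have [pe|pn] := eqVneq p [::].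
  subst p; case: n vr hp => [|n] vr hp; first by case: vr.
  rewrite /mkv /parent /=.
  have [k [h1 h2]] := nthcat_junction root_v (fL_size T) n.
  rewrite /fL blk_last blk_head in h1 h2.
  have [k' [h1' h2']] := nthcat_junction root_v (fR_size T) n.
  rewrite /fR blk_last blk_head in h1' h2'.
  split.
    exists (Posz k); rewrite -[Posz k + 1]/(Posz k + Posz 1) -PoszD addn1 /=.
    by rewrite !leftseqE h1 h2.
  exists (- (k'.+1%:Z)); rewrite negS1 !cvN !rightseqE h1' h2'; split => //.
rewrite mkv_ne //; clear vr.
case: b hp => hp.
  have [[s1 [s2 e1]] [s3 [s4 e2]]] := blk_trav n true hp pn.
  have [k [h1 h2]] := nthcat_pair root_v (fL_size T) e1.
  have [k' [h1' h2']] := nthcat_pair root_v (fL_size T) e2.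
  split.
    exists (Posz k); rewrite -[Posz k + 1]/(Posz k + Posz 1) -PoszD addn1 /=.
    by rewrite !leftseqE h1 h2.
  exists (Posz k'); rewrite -[Posz k' + 1]/(Posz k' + Posz 1) -PoszD addn1 /=.
  by rewrite !leftseqE h1' h2'.
have [[s1 [s2 e1]] [s3 [s4 e2]]] := blk_trav n false hp pn.
have [k [h1 h2]] := nthcat_pair root_v (fR_size T) e1.
have [k' [h1' h2']] := nthcat_pair root_v (fR_size T) e2.
split.
  exists (- (k'.+1%:Z)); rewrite negS1 !cvN !rightseqE h1' h2'; split => //.
exists (- (k.+1%:Z)); rewrite negS1 !cvN !rightseqE h1 h2; split => //.
Qed.

Lemma int_split (i j : int) : i <= j -> exists d : nat, j = i + d%:Z.
Proof. move=> h; exists `|j - i|%N; lia. Qed.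

Lemma nth_wl cs i : wl (LNode cs) ->
  (let: (d, c) := nth (0, LNode [::]) cs i in (-1 <= d <= 1) /\ wl c).
Proof.
elim: cs i => [|[d c] cs IH] i /=; first by case: i.
move=> [hd [hc hcs]]; case: i => [|i] //=.
exact: (IH i hcs).
Qed.

Lemma pl_step t p : wl t -> p != [::] ->
  -1 <= pathlabel t p - pathlabel t (bl p) <= 1.
Proof.
elim: p t => [//|i p IH] [cs] hw _.
have [->|pn] := eqVneq p [::].
  rewrite /bl /=; move: (nth_wl i hw); case: (nth (0, LNode [::]) cs i) => d c /= [hd _].
  by rewrite addr0 subr0.
rewrite bl_cons //=; move: (nth_wl i hw); case: (nth (0, LNode [::]) cs i) => d c /= [hd hc].
have := IH c hc pn; lia.
Qed.

Lemma lab_mkv T n b q : lab T (mkv n b q) = lab T (n, b, q).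
Proof. by case: q => //; case: b. Qed.

Lemma lab_step T (HT : in_support_mu T) v : -1 <= lab T v - lab T (parent v) <= 1.
Proof.
case: HT => [h0 [hs [hl hr]]].
case: v => [[n b] p].
have [->|pn] := eqVneq p [::].
  rewrite /parent /lab /=; case: b; case: n => [|n] /=; rewrite ?subrr ?addr0 //;
  have := hs n; lia.
rewrite parent_mkv // lab_mkv /lab.
have := @pl_step (if b then lt T n else rt T n) p; case: b => /= h.
  have := h (hl n) pn; lia.
have := h (hr n) pn; lia.
Qed.

Lemma clab_step T (HT : in_support_mu T) (i : int) : -1 <= clab T (i + 1) - clab T i <= 1.
Proof.
rewrite /clab; case: (cv_adj T i) => ->.
  exact: lab_step HT (cv T (i + 1)).
move: (lab_step HT (cv T i)) => /andP [h1 h2]; apply/andP; split.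
  by rewrite -opprB lerNr opprK.
by rewrite -opprB lerNl.
Qed.

Lemma clab0 T (HT : in_support_mu T) : clab T 0 = 0.
Proof. by rewrite /clab /= leftseq0 /=; case: HT => -> _; rewrite addr0. Qed.

Lemma clab_bound T (HT : in_support_mu T) i : exists N : nat, i <= N%:Z /\ - (N%:Z) <= clab T i.
Proof.
have hp : forall k : nat, - (k%:Z) <= clab T k.
  elim=> [|k IH]; first by rewrite clab0.
  have := clab_step HT k; have -> : (k%:Z + 1 = k.+1%:Z) by lia. lia.
have hn : forall k : nat, - (k%:Z) <= clab T (- (k%:Z)).
  elim=> [|k IH]; first by rewrite oppr0 clab0.
  have := clab_step HT (- (k.+1%:Z)); rewrite negS1; lia.
case: i => [k|m]; first by exists k; split => //; exact: hp.
exists m.+1; rewrite NegzE; split; first lia.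
exact: hn.
Qed.

Lemma succ_ex T (HT : in_support_mu T)
  (Hinf : forall m : int, exists k : nat, lab T (leftseq T k) <= m) i :
  exists j, is_succ T i j.
Proof.
have [N [hN hc]] := clab_bound HT i.
have [K hK] := Hinf (- (N%:Z) - (N%:Z) - 2).
have hKb := clab_bound HT (Posz K).
have hKN : i < Posz K.
  have [N' [h1 h2]] := hKb.
  have hlip : - (K%:Z) <= clab T K.
    clear -HT; elim: K => [|k IH]; first by rewrite clab0.
    have := clab_step HT k; have -> : (k%:Z + 1 = k.+1%:Z) by lia. lia.
  rewrite /clab /= in hlip; lia.
have [d0 hd0] := int_split (ltW hKN).
have hex : exists d : nat, clab T (i + d.+1%:Z) <= clab T i - 1.
  case: d0 hd0 => [|d] hd0; first by rewrite addr0 in hd0; rewrite hd0 in hKN; rewrite ltxx in hKN.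
  have hK' : clab T (Posz K) <= - (N%:Z) - (N%:Z) - 2 := hK.
  exists d; rewrite -hd0; lia.
case: (ex_minnP hex) => d hd hmin.
have hstep : forall x : int, clab T x - 1 <= clab T (x + 1) by move=> x; have := clab_step HT x; lia.
have hnot : forall d', (d' < d)%N -> clab T i - 1 < clab T (i + d'.+1%:Z).
  move=> d' hd'; rewrite ltNge; apply/negP => h; have := hmin d' h; lia.
exists (i + d.+1%:Z); split; first lia.
split.
  apply/eqP; rewrite eq_le hd /=.
  case: d hd hmin hnot => [|d] hd hmin hnot.
    have := hstep i; have -> : (i + 1%:Z = i + 1) by []. lia.
  have := hnot d (ltnSn d); have := hstep (i + d.+1%:Z).
  have -> : (i + d.+1%:Z + 1 = i + d.+2%:Z) by lia. lia.
move=> k hik hkj.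
have [e he] := int_split (ltW hik).
case: e he => [|e] he; first by rewrite addr0 in he; rewrite he ltxx in hik.
have he' : (e < d)%N by lia.
have := hnot e he'; rewrite he; lia.
Qed.

Definition good T (r : nat) v := forall v', on_geod v' v -> - (r%:Z) < lab T v'.

Lemma on_geodP v' v : on_geod v' v <-> v' = v \/ on_geod v' (parent v).
Proof.
split.
  move=> [[|k] hk]; first by left.
  by right; exists k; rewrite -iterSr.
case=> [->|[k hk]]; first by exists 0%N.
by exists k.+1; rewrite iterSr.
Qed.

Lemma goodE T r v : good T r v <-> - (r%:Z) < lab T v /\ good T r (parent v).
Proof.
split.
  move=> h; split; first by apply: h; exists 0%N.
  by move=> v' hv'; apply: h; apply/on_geodP; right.
move=> [h1 h2] v' /on_geodP [->|]; [exact: h1|exact: h2].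
Qed.

Lemma good_tadj T r x y : tadj x y -> - (r%:Z) < lab T y -> good T r x -> good T r y.
Proof.
case=> [->|->] hy hx; first by apply/goodE.
by case/goodE: hx.
Qed.

Lemma iter_parent_root k : iter k parent root_v = root_v.
Proof. by elim: k => [//|k IH]; rewrite iterS IH. Qed.

Lemma lab_root T (HT : in_support_mu T) : lab T root_v = 0.
Proof. by case: HT => h _; rewrite /lab /= h addr0. Qed.

Lemma good_root T r (HT : in_support_mu T) (hr : (0 < r)%N) : good T r root_v.
Proof.
move=> v' [k <-]; rewrite iter_parent_root lab_root //; lia.
Qed.

Lemma prop_interval T r (i : int) (d : nat) :
  (forall e : nat, (e <= d)%N -> - (r%:Z) < clab T (i + e%:Z)) ->
  (good T r (cv T i) <-> good T r (cv T (i + d%:Z))).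
Proof.
elim: d => [|d IH] h; first by rewrite addr0.
have {}IH := IH (fun e he => h e (leqW he)).
have ta := cv_adj T (i + d%:Z).
have e1 : i + d%:Z + 1 = i + d.+1%:Z by lia.
rewrite e1 in ta.
split.
  move/IH => g; apply: good_tadj ta _ g; exact: h.
move=> g; apply/IH; apply: good_tadj (tadj_sym ta) _ g.
exact: h.
Qed.

Lemma succ_lab T (HT : in_support_mu T) (i j : int) : is_succ T i j ->
  forall k : int, i <= k -> k < j -> clab T i <= clab T k.
Proof.
move=> [hij [hj hb]] k hik hkj.
have [e ek] := int_split hik; subst k.
elim: e hkj hik => [|e IH] hkj hik; first by rewrite addr0.
have h1 : i + e%:Z < j by lia.
have := IH h1 ltac:(lia).
have := clab_step HT (i + e%:Z).
have e1 : i + e%:Z + 1 = i + e.+1%:Z by lia.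
rewrite e1.
have := hb (i + e.+1%:Z) ltac:(lia) hkj.
lia.
Qed.

Lemma svert_lab T i x : svert T i x -> lab T x = clab T i - 1.
Proof. by move=> [j [[_ [hl _]] <-]]. Qed.

Lemma aug_cases T eta x y : aug_adj T (Phi T eta) x y ->
  (exists i j, is_succ T i j /\ ((x = cv T i /\ y = cv T j) \/ (x = cv T j /\ y = cv T i)))
  \/ (exists i : int, lab T x = lab T y /\
        ((x = cv T i /\ y = cv T (i + 1)) \/ (x = cv T (i + 1) /\ y = cv T i))).
Proof.
case=> [h|[x0 [x1 [x2 [x3 [l [hf hpat]]]]]]]; first by left.
move: hf => [i [j [e1 [e2 hf]]]]; rewrite /= in hf.
case: hf => [[hb [h0 [s1 [h2 s3]]]] | [[hb [h0 [s1 [s2 h3]]]] | [hb [h0 [s1 [s2 h3]]]]]].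
- have L1 := svert_lab s1; have L3 := svert_lab s3.
  rewrite /clab -e2 in L3; rewrite /clab in L1.
  case: hpat => [[a0 [a1 [a2 [a3 _]]]] | [a0 [a1 [a2 [a3 hxy]]]]].
    subst; lia.
  right; exists i; subst; split; first by case: hxy => [[-> ->]|[-> ->]]; lia.
  by case: hxy => [[-> ->]|[-> ->]]; [left|right].
- have L1 := svert_lab s1; have L2 := svert_lab s2; rewrite /clab in L1 L2.
  exfalso; case: hpat => [[a0 [a1 [a2 [a3 _]]]] | [a0 [a1 [a2 [a3 hxy]]]]]; subst; lia.
- have L1 := svert_lab s1; have L2 := svert_lab s2; rewrite /clab -e2 -e1 in L1 L2.
  exfalso; case: hpat => [[a0 [a1 [a2 [a3 _]]]] | [a0 [a1 [a2 [a3 hxy]]]]]; subst; lia.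
Qed.

Lemma step_good T eta r (HT : in_support_mu T) x y :
  aug_adj T (Phi T eta) x y -> - (r%:Z) < lab T x -> - (r%:Z) < lab T y ->
  good T r x -> good T r y.
Proof.
move=> /aug_cases [[i [j [hs hxy]]]|[i [_ hxy]]] hx hy.
  have [hij [hj _]] := hs.
  have [d ed] := int_split (ltW hij).
  have hall : forall e : nat, (e <= d)%N -> - (r%:Z) < clab T (i + e%:Z).
    move=> e he.
    have hjr : - (r%:Z) < clab T j by case: hxy => [[ex ey]|[ex ey]]; subst x y; rewrite /clab; lia.
    have [he'|he'] := eqVneq e d; first by subst e; rewrite -ed.
    have := @succ_lab T HT i j hs (i + e%:Z) ltac:(lia) ltac:(lia); lia.
  have := prop_interval hall; rewrite -ed => eqv.
  by case: hxy => [[-> ->]|[-> ->]]; [exact: eqv.1|exact: eqv.2].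
have ta := cv_adj T i.
case: hxy => [[ex ey]|[ex ey]] g; subst x y.
  exact: good_tadj ta hy g.
exact: good_tadj (tadj_sym ta) hy g.
Qed.

Lemma conn_hd (P : vertex -> Prop) adj x z : conn P adj x z -> P x.
Proof. by case. Qed.

Lemma conn_snoc (P : vertex -> Prop) adj x y z :
  conn P adj x y -> adj y z -> P z -> conn P adj x z.
Proof.
elim=> [a pa|a b c pa ab _ IH] hz pz.
  by apply: conn_step pa hz _; apply: conn_refl.
by apply: conn_step pa ab _; apply: IH.
Qed.

Lemma Fr_good T eta r (HT : in_support_mu T) (hr : (0 < r)%N) v :
  Fr T (Phi T eta) r v -> good T r v.
Proof.
rewrite /Fr => h.
suff : forall x z, conn (fun w => mV (Phi T eta) w /\ - (r%:Z) < lab T w)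
   (aug_adj T (Phi T eta)) x z -> good T r x -> good T r z.
  by move=> /(_ _ _ h); apply; exact: good_root.
move=> x z; elim=> [//|a b c [_ pa] ab cbc IH] ga.
apply: IH; apply: step_good ab pa _ ga => //.
by case: (conn_hd cbc).
Qed.

Definition mu (v : vertex) : nat := (v.1.1 + size v.2)%N.

Lemma mu_mkv n b q : mu (mkv n b q) = (n + size q)%N.
Proof. by case: q. Qed.

Lemma mu_parent_le v : (mu (parent v) <= mu v)%N.
Proof.
case: v => [[n b] p]; have [->|pn] := eqVneq p [::]; first by rewrite /mu /=; lia.
rewrite parent_mkv // mu_mkv /mu /= /bl size_take; case: ifP => _; lia.
Qed.

Lemma mu_parent T v : VT T v -> v <> root_v -> (mu (parent v) < mu v)%N.
Proof.
move=> [i <-] vr; have [n [b [p [e _]]]] := cv_form T i.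
rewrite e in vr *; clear e.
have [pe|pn] := eqVneq p [::].
  subst p; case: n vr => [|n] vr; first by case: vr.
  by rewrite /= /mu /=.
rewrite mkv_ne // parent_mkv // mu_mkv /mu /= /bl size_take; clear vr.
case: p pn => [//|a p] _ /=; rewrite ltnSn; lia.
Qed.

Lemma VT_parent T v : VT T v -> v <> root_v -> VT T (parent v).
Proof. by move=> hv vr; have [[i [hi _]] _] := cv_trav hv vr; exists i. Qed.

Lemma tree_edge_aug T eta (HT : in_support_mu T)
  (Hinf : forall m : int, exists k : nat, lab T (leftseq T k) <= m) v :
  VT T v -> v <> root_v -> aug_adj T (Phi T eta) (parent v) v.
Proof.
move=> hv vr; have [[i [hi1 hi2]] [j [hj1 hj2]]] := cv_trav hv vr.
have hs := lab_step HT v.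
have [e1|ne1] := eqVneq (lab T v) (lab T (parent v) - 1).
  left; exists i, (i + 1); split.
    split; first lia.
    split; first by rewrite /clab hi1 hi2.
    move=> k h1 h2; lia.
  by left.
have [e2|ne2] := eqVneq (lab T v) (lab T (parent v) + 1).
  left; exists j, (j + 1); split.
    split; first lia.
    split; first by rewrite /clab hj1 hj2; lia.
    move=> k h1 h2; lia.
  by right.
have e0 : lab T v = lab T (parent v) by lia.
have [si hsi] := succ_ex HT Hinf i.
have [sj hsj] := succ_ex HT Hinf j.
right; exists (parent v), (cv T si), v, (cv T sj), (lab T (parent v) - 1).
split.
  exists i, j; rewrite hi1 hi2 hj1 hj2 /=; split => //; split => //.
  left; split => //; split => //.
  split; first by exists si.
  split => //.
  by exists sj.
right; have [_ [ls _]] := hsi; have [_ [lt' _]] := hsj.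
rewrite /clab hi1 hj1 in ls lt'.
split; first lia.
split; first lia.
split; first lia.
split; first lia.
by left.
Qed.

Lemma fr_of_good T eta r (HT : in_support_mu T) (hr : (0 < r)%N)
  (Hinf : forall m : int, exists k : nat, lab T (leftseq T k) <= m) :
  forall N v, (mu v < N)%N -> VT T v -> good T r v -> Fr T (Phi T eta) r v.
Proof.
elim=> [//|N IH] v hN hv g.
have [vr|vr] := eqVneq v root_v.
  subst v; apply: conn_refl; split => //; rewrite lab_root //; lia.
have vr' : v <> root_v by apply/eqP.
have hp := VT_parent hv vr'.
have hmu := mu_parent hv vr'.
have [lv gp] := goodE T r v; have {lv gp} [lv gp] := lv g.
have := IH (parent v) ltac:(lia) hp gp.
move=> hF; apply: conn_snoc hF _ _.
  exact: tree_edge_aug.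
by split.
Qed.

Theorem proposition5 (T : itree) (eta : bool)
  (HT : in_support_mu T)
  (Hinf : forall m : int, exists k : nat, lab T (leftseq T k) <= m)
  (r : nat) (hr : (0 < r)%N) (v : vertex) (hv : mV (Phi T eta) v) :
  (Fr T (Phi T eta) r v <->
     (forall v', on_geod v' v -> lab T v' > - (r%:Z)))
  /\
  (dFr T (Phi T eta) r v <->
     (lab T v = - (r%:Z) /\
      forall v', on_geod v' v -> v' <> v -> lab T v' > - (r%:Z))).
Proof.
have P1 : forall w, mV (Phi T eta) w -> Fr T (Phi T eta) r w <-> good T r w.
  move=> w hw; split; first exact: Fr_good.
  exact: (@fr_of_good T eta r HT hr Hinf (mu w).+1).
split; first exact: P1.
split.
- move=> [_ [hle [w [hFw hadj]]]].
  have gw := Fr_good HT hr hFw.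
  have lw : - (r%:Z) < lab T w by apply: gw; exists 0%N.
  case/aug_cases: hadj => [[i [j [hs hxy]]]|[i [hl _]]]; last lia.
  have [hij [hj _]] := hs.
  case: hxy => [[ev ew]|[ev ew]].
    rewrite /clab -ev -ew in hj; lia.
  rewrite /clab -ev -ew in hj.
  split; first lia.
  have [d ed] := int_split (ltW hij).
  case: d ed => [|d] ed; first by rewrite addr0 in ed; rewrite ed ltxx in hij.
  have hall : forall e : nat, (e <= d)%N -> - (r%:Z) < clab T (i + e%:Z).
    move=> e he; have := @succ_lab T HT i j hs (i + e%:Z) ltac:(lia) ltac:(lia).
    rewrite /clab -ew; lia.
  have g1 : good T r (cv T (i + d%:Z)) by apply/(prop_interval hall); rewrite -ew.
  have ta := cv_adj T (i + d%:Z).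
  have e1 : i + d%:Z + 1 = j by lia.
  rewrite e1 -ev in ta.
  case: ta => ta.
    move=> vv hvv nvv; case/on_geodP: hvv => [//|]; by move=> h; apply: g1; rewrite ta.
  exfalso; have := (goodE T r _).1 g1; move=> [_ gv]; rewrite -ta in gv.
  have : - (r%:Z) < lab T v by apply: gv; exists 0%N.
  lia.
- move=> [lv sg].
  have vr : v <> root_v by move=> e; rewrite e lab_root // in lv; lia.
  have hp := VT_parent hv vr.
  have hmu := mu_parent hv vr.
  have npv : forall v', on_geod v' (parent v) -> v' <> v.
    move=> v' [k <-] e.
    have : (mu (iter k parent (parent v)) <= mu (parent v))%N.
      elim: k {e} => [//|k IH]; rewrite iterS; exact: leq_trans (mu_parent_le _) IH.
    rewrite e; lia.
  have gp : good T r (parent v).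
    move=> v' hv'; apply: sg; [apply/on_geodP; right => // | exact: npv].
  have lp : - (r%:Z) < lab T (parent v) by apply: gp; exists 0%N.
  split => //; split; first by rewrite lv.
  exists (parent v); split; first by apply/(P1 _ hp).
  have [[i [hi1 hi2]] _] := cv_trav hv vr.
  have hs := lab_step HT v.
  left; exists i, (i + 1); split.
    split; first lia.
    split; first by rewrite /clab hi1 hi2; lia.
    move=> k h1 h2; lia.
  by right.
Qed.
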